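(* Let $X$ be a Banach space and let $\Pi(X)=\{(x,x^* )\in S_X\times S_{X^*}\colon x^*(x)=1\}$. The following are equivalent: (i) $X$ has property [P]; (ii) the set $\{(x,x^* )\in\operatorname{str\text{-}exp}(B_X)\times\operatorname{SE}(X)\colon \|x^*\|=x^*(x)=1\}$ is dense in $\Pi(X)$; (iii) $X$ has property [P] witnessed by the function $\varepsilon\mapsto\varepsilon^2/2$.
   Context: $\operatorname{SE}(X)$ is the set of $x^*\in X^*$ strongly exposing $B_X$: there is $x_0\in B_X$ with $\operatorname{Re}x^*(x_0)=\sup_{B_X}\operatorname{Re}x^*$ and every sequence $\{x_n\}\subset B_X$ with $\operatorname{Re}x^*(x_n)\to\operatorname{Re}x^*(x_0)$ converges in norm to $x_0$; $\operatorname{str\text{-}exp}(B_X)$ is the set of points of $B_X$ strongly exposed by some functional. $X$ has property [P] (witnessed by a function $\varepsilon\in(0,1)\mapsto\eta(\varepsilon)>0$) if whenever $x\in S_X$, $x^*\in S_{X^*}$ satisfy $\operatorname{Re}x^*(x)>1-\eta(\varepsilon)$, there exist $y^*\in\operatorname{SE}(X)$ and $y\in S_X$ with $\|y^*\|=y^*(y)=1$, $\|y^*-x^*\|<\varepsilon$ and $\|y-x\|<\varepsilon$. Density in $\Pi(X)$ is with respect to the product norm topology. *)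

(* Defs.v *)
From mathcomp Require Import all_boot all_order all_algebra.
From mathcomp Require Import all_classical all_reals all_analysis.
From mathcomp.real_closed Require Import complex.
Import Order.TTheory GRing.Theory Num.Theory.
Import numFieldNormedType.Exports.
Set Implicit Arguments. Unset Strict Implicit. Unset Printing Implicit Defensive.
Local Open Scope classical_set_scope.
Local Open Scope ring_scope.

(* Banach spaces over K = R (real case, re = id) or K = R[i] (complex case,
   re = complex real part).  [re] is used both for the real part Re and to
   read the (real-valued) norm of K as an element of R. *)
Section BanachDefs.
Context {R : realType} {K : numFieldType} (re : K -> R) {X : normedModType K}.

Definition nrm (x : X) : R := re `|x|.

Definition ballX : set X := [set x | nrm x <= 1].
Definition sphX : set X := [set x | nrm x = 1].

Definition is_dual (f : X -> K) : Prop :=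
  (forall (a : K) (u v : X), f (a *: u + v) = a * f u + f v) /\ continuous f.

Definition dnorm (f : X -> K) : R := sup [set re `|f x| | x in ballX].

Definition strongly_exposes (f : X -> K) (x0 : X) : Prop :=
  ballX x0 /\
  re (f x0) = sup [set re (f x) | x in ballX] /\
  forall u : nat -> X, (forall n, ballX (u n)) ->
    (fun n => re (f (u n))) @ \oo --> re (f x0) -> u @ \oo --> x0.

Definition SE (f : X -> K) : Prop := is_dual f /\ exists x0, strongly_exposes f x0.

Definition str_exp (x : X) : Prop := exists f, is_dual f /\ strongly_exposes f x.

Definition PiX (x : X) (f : X -> K) : Prop :=
  sphX x /\ is_dual f /\ dnorm f = 1 /\ f x = 1.

Definition propP_with (eta : R -> R) : Prop :=
  (forall e : R, 0 < e < 1 -> 0 < eta e) /\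
  forall e : R, 0 < e < 1 ->
  forall (x : X) (f : X -> K), sphX x -> is_dual f -> dnorm f = 1 ->
    re (f x) > 1 - eta e ->
    exists (g : X -> K) (y : X),
      SE g /\ sphX y /\ dnorm g = 1 /\ g y = 1 /\
      dnorm (fun z => g z - f z) < e /\ nrm (y - x) < e.

Definition propP : Prop := exists eta : R -> R, propP_with eta.

Definition dense_strexp_SE : Prop :=
  forall (x : X) (f : X -> K), PiX x f ->
  forall e : R, 0 < e ->
  exists (y : X) (g : X -> K),
    str_exp y /\ SE g /\ dnorm g = 1 /\ g y = 1 /\
    nrm (y - x) < e /\ dnorm (fun z => g z - f z) < e.

Definition lemma3p10_equiv : Prop :=
  (propP <-> dense_strexp_SE) /\
  (dense_strexp_SE <-> propP_with (fun e => e ^+ 2 / 2)).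

End BanachDefs.

(* Main.v *)
Require Import Defs.
From mathcomp Require Import all_boot all_order all_algebra.
From mathcomp Require Import all_classical all_reals all_analysis.
From mathcomp.real_closed Require Import complex.
From mathcomp Require Import ring lra.
Import Order.TTheory GRing.Theory Num.Theory.
Import numFieldNormedType.Exports.
Local Open Scope classical_set_scope.
Local Open Scope ring_scope.
Set Implicit Arguments. Unset Strict Implicit. Unset Printing Implicit Defensive.

Section HahnBanach.
Variables (R : realType) (V : zmodType) (sc : R -> V -> V).
Hypothesis scDv : forall s v w, sc s (v + w) = sc s v + sc s w.
Hypothesis scDs : forall s t v, sc (s + t) v = sc s v + sc t v.
Hypothesis scA : forall s t v, sc s (sc t v) = sc (s * t) v.
Hypothesis sc1 : forall v, sc 1 v = v.

Lemma hb_sc0 v : sc 0 v = 0.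
Proof.
have h := scDs 0 0 v; rewrite addr0 in h.
have : sc 0 v + sc 0 v = sc 0 v + 0 by rewrite addr0 -h.
exact: addrI.
Qed.

Lemma hb_scN s v : sc (- s) v = - sc s v.
Proof.
apply/eqP; rewrite -(subr_eq0 _ (- _)) opprK -scDs addNr; apply/eqP; exact: hb_sc0.
Qed.

Lemma hb_scv0 s : sc s 0 = 0.
Proof.
have h := scDv s 0 0; rewrite addr0 in h.
have : sc s 0 + sc s 0 = sc s 0 + 0 by rewrite addr0 -h.
exact: addrI.
Qed.

Definition sublin (p : V -> R) :=
  (forall v w, p (v + w) <= p v + p w) /\ (forall s v, 0 < s -> p (sc s v) = s * p v).

Lemma sublin0 p : sublin p -> p 0 = 0.
Proof.
move=> [_ h]; have := h 2 0 (ltr0Sn _ 1); rewrite hb_scv0 => e; lra.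
Qed.

Lemma sublin_ge0 p : sublin p -> forall s v, 0 <= s -> p (sc s v) = s * p v.
Proof.
move=> hp s v; rewrite le_eqVlt => /orP[/eqP<-|]; last exact: hp.2.
by rewrite hb_sc0 mul0r sublin0.
Qed.

Lemma sublinN p : sublin p -> forall v, - p (- v) <= p v.
Proof.
move=> hp v; have := hp.1 v (- v); rewrite subrr sublin0 //; lra.
Qed.

Variable q : V -> R.
Hypothesis q_sub : sublin q.

Definition FT := {p : V -> R | sublin p /\ forall v, p v <= q v}.
Definition FR (a b : FT) : bool := `[< forall v, sval b v <= sval a v >].

Lemma FT_lb (a : FT) v : - q (- v) <= sval a v.
Proof.
case: a => p [sp pq] /=; have := sublinN sp v; have := pq (- v); lra.
Qed.

Section Chain.
Variable A : set FT.
Hypothesis Atot : total_on A FR.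
Variable a0 : FT.
Hypothesis Aa0 : A a0.

Definition chinf v := inf [set sval a v | a in A].

Lemma chinf_lb v : has_lbound [set sval a v | a in A].
Proof. exists (- q (- v)) => _ [a _ <-]; exact: FT_lb. Qed.

Lemma chinf_le a v : A a -> chinf v <= sval a v.
Proof. move=> Aa; apply: (ge_inf (chinf_lb v)); by exists a. Qed.

Lemma chinf_ge v x : (forall a, A a -> x <= sval a v) -> x <= chinf v.
Proof.
move=> h; apply: lb_le_inf; first by exists (sval a0 v), a0.
by move=> _ [a Aa <-]; exact: h.
Qed.

Lemma chinf_sublin : sublin chinf.
Proof.
split.
- move=> v w.
  have key : forall a b, A a -> A b -> chinf (v + w) <= sval a v + sval b w.
    move=> a b Aa Ab; case: (Atot Aa Ab) => /asboolP hab.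
    + apply: (le_trans (chinf_le _ Ab)).
      case: b hab {Ab} => pb [sb _] /= hab.
      apply: (le_trans (sb.1 v w)); have := hab v; lra.
    + apply: (le_trans (chinf_le _ Aa)).
      case: a hab {Aa} => pa [sa _] /= hab.
      apply: (le_trans (sa.1 v w)); have := hab w; lra.
  have h1 : forall b, A b -> chinf (v + w) - sval b w <= chinf v.
    move=> b Ab; apply: chinf_ge => a Aa; have := key a b Aa Ab; lra.
  have h2 : chinf (v + w) - chinf v <= chinf w.
    apply: chinf_ge => b Ab; have := h1 b Ab; lra.
  lra.
- move=> s v s0; apply/eqP; rewrite eq_le; apply/andP; split.
  + rewrite -ler_pdivrMl //; apply: chinf_ge => a Aa.
    rewrite ler_pdivrMl //; apply: (le_trans (chinf_le _ Aa)).
    by case: a {Aa} => p [[_ hp] _] /=; rewrite hp.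
  + apply: chinf_ge => a Aa; case: a Aa => p [[sp hp] pq] Aa /=.
    rewrite hp // ler_pM2l //; exact: (chinf_le _ Aa).
Qed.

Lemma chinf_q v : chinf v <= q v.
Proof. apply: (le_trans (chinf_le _ Aa0)); exact: (proj2 (svalP a0) v). Qed.

End Chain.

Section Push.
Variable p : V -> R.
Hypothesis sp : sublin p.
Hypothesis pq : forall v, p v <= q v.
Variable a : V.

Definition pshS v := [set p (v + sc t a) - t * p a | t in [set t : R | 0 <= t]].
Definition psh v := inf (pshS v).

Lemma psh_lb v : has_lbound (pshS v).
Proof.
exists (- p (- v)) => _ [t t0 <-].
have := sp.1 (v + sc t a) (- v); rewrite addrAC subrr add0r sublin_ge0 //; lra.
Qed.

Lemma psh_le v t : 0 <= t -> psh v <= p (v + sc t a) - t * p a.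
Proof. move=> t0; apply: (ge_inf (psh_lb v)); by exists t. Qed.

Lemma psh_ge v x : (forall t, 0 <= t -> x <= p (v + sc t a) - t * p a) -> x <= psh v.
Proof.
move=> h; apply: lb_le_inf; first by exists (p (v + sc 0 a) - 0 * p a); exists 0 => /=.
by move=> _ [t t0 <-]; exact: h.
Qed.

Lemma psh_lep v : psh v <= p v.
Proof. by have := psh_le v (lexx 0); rewrite hb_sc0 addr0 mul0r subr0. Qed.

Lemma psh_sublin : sublin psh.
Proof.
split.
- move=> v w.
  have key : forall s t, 0 <= s -> 0 <= t ->
      psh (v + w) <= (p (v + sc s a) - s * p a) + (p (w + sc t a) - t * p a).
    move=> s t s0 t0; apply: (le_trans (psh_le (v + w) (addr_ge0 s0 t0))).
    have e : v + w + sc (s + t) a = (v + sc s a) + (w + sc t a).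
      by rewrite scDs addrACA.
    rewrite e; have := sp.1 (v + sc s a) (w + sc t a); lra.
  have h1 : forall t, 0 <= t -> psh (v + w) - (p (w + sc t a) - t * p a) <= psh v.
    move=> t t0; apply: psh_ge => s s0; have := key s t s0 t0; lra.
  have h2 : psh (v + w) - psh v <= psh w.
    apply: psh_ge => t t0; have := h1 t t0; lra.
  lra.
- move=> c v c0; apply/eqP; rewrite eq_le; apply/andP; split.
  + rewrite -ler_pdivrMl //; apply: psh_ge => t t0.
    rewrite ler_pdivrMl //; apply: (le_trans (psh_le _ (mulr_ge0 (ltW c0) t0))).
    rewrite -scA -scDv sp.2 //; lra.
  + apply: psh_ge => t t0.
    have ct : 0 <= t / c by rewrite divr_ge0 // ltW.
    have := psh_le v ct; rewrite -(ler_pM2l c0) => h; apply: (le_trans h).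
    have e1 : sc c (v + sc (t / c) a) = sc c v + sc t a.
      by rewrite scDv scA mulrCA divff ?gt_eqF // mulr1.
    have e2 : c * (t / c * p a) = t * p a.
      by rewrite mulrA mulrCA divff ?gt_eqF // mulr1.
    by rewrite mulrBr e2 -(sp.2 c) // e1.
Qed.

End Push.

Lemma hahn_banach_sublin : exists u : V -> R,
  (forall v w, u (v + w) = u v + u w) /\ (forall s v, u (sc s v) = s * u v) /\
  (forall v, u v <= q v).
Proof.
pose t0 : FT := exist _ q (conj q_sub (fun v => lexx (q v))).
have [m mmax] : exists t, premaximal (fun x y : FT => FR x y) t.
  apply: (ZL_preorder t0).
  - by move=> t; apply/asboolP => v.
  - move=> r s t /asboolP h1 /asboolP h2; apply/asboolP => v; exact: le_trans (h2 v) (h1 v).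
  - move=> A Atot.
    have [->|/set0P [a0 Aa0]] := eqVneq A set0; first by exists t0.
    exists (exist _ (chinf A) (conj (chinf_sublin Atot Aa0) (chinf_q Aa0))).
    by move=> s As; apply/asboolP => v /=; apply: chinf_le.
case: m mmax => p [sp pq] mmax.
have oddp : forall a, p (- a) = - p a.
  move=> a.
  pose pa : FT := exist _ (psh p a) (conj (psh_sublin sp a)
                    (fun v => le_trans (psh_lep sp a v) (pq v))).
  have h1 : FR (exist _ p (conj sp pq)) pa by apply/asboolP => v /=; exact: psh_lep.
  have /asboolP /= h2 := mmax pa h1.
  have h3 := psh_le sp a (- a) ler01.
  rewrite sc1 addNr sublin0 // mul1r in h3.
  have := h2 (- a); have := sublinN sp a; lra.
exists p; split; [|split] => //.
- move=> v w; apply/eqP; rewrite eq_le sp.1 /=.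
  have := sp.1 (- v) (- w); rewrite -opprD !oddp; lra.
- move=> s v; case: (ltgtP s 0) => [s0|s0|->].
  + have e : sc s v = - sc (- s) v by rewrite hb_scN opprK.
    by rewrite e oddp sp.2 ?oppr_gt0 // mulNr opprK.
  + exact: sp.2.
  + by rewrite hb_sc0 sublin0 // mul0r.
Qed.

End HahnBanach.

Fixpoint iterseq (T : Type) (x0 : T) (nxt : T -> nat -> T) (n : nat) : T :=
  match n with 0%N => x0 | n'.+1 => nxt (iterseq x0 nxt n') n' end.

Section Generic.
Context {R : realType} {K : numFieldType} (re : K -> R) (ofR : R -> K)
  {X : completeNormedModType K}.
Hypothesis reD : forall a b, re (a + b) = re a + re b.
Hypothesis re_ofR : forall r, re (ofR r) = r.
Hypothesis ofRD : forall r s, ofR (r + s) = ofR r + ofR s.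
Hypothesis ofRM : forall r s, ofR (r * s) = ofR r * ofR s.
Hypothesis ofR1 : ofR 1 = 1.
Hypothesis normK : forall k : K, `|k| = ofR (re `|k|).
Hypothesis ler_ofR : forall r s, (ofR r <= ofR s) = (r <= s).
Hypothesis ltr_ofR : forall r s, (ofR r < ofR s) = (r < s).
Hypothesis re_le_norm : forall k, re k <= re `|k|.
Hypothesis re_norm_eq : forall k, re k = re `|k| -> k = `|k|.
Hypothesis reM : forall r k, re (ofR r * k) = r * re k.
Hypothesis normofR : forall r, `|ofR r| = ofR `|r|.

Local Notation nrm := (@nrm R K re X).
Local Notation ballX := (@ballX R K re X).
Local Notation sphX := (@sphX R K re X).
Local Notation dnorm := (@dnorm R K re X).

Lemma ofR0 : ofR 0 = 0.
Proof.
have h := ofRD 0 0; rewrite addr0 in h.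
have : ofR 0 + ofR 0 = ofR 0 + 0 by rewrite addr0 -h.
exact: addrI.
Qed.

Lemma ofRN r : ofR (- r) = - ofR r.
Proof. by apply/eqP; rewrite -(subr_eq0 _ (- _)) opprK -ofRD addNr ofR0. Qed.

Lemma ofRB r s : ofR (r - s) = ofR r - ofR s.
Proof. by rewrite ofRD ofRN. Qed.

Lemma re0 : re 0 = 0.
Proof. by rewrite -ofR0 re_ofR. Qed.

Lemma reN k : re (- k) = - re k.
Proof. have := reD k (- k); rewrite subrr re0; lra. Qed.

Lemma reB a b : re (a - b) = re a - re b.
Proof. by rewrite reD reN. Qed.

Lemma re1 : re 1 = 1.
Proof. by rewrite -ofR1 re_ofR. Qed.

Lemma nK_ge0 (k : K) : 0 <= re `|k|.
Proof. by rewrite -(ler_ofR 0) ofR0 -normK. Qed.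

Lemma nKM (a b : K) : re `|a * b| = re `|a| * re `|b|.
Proof. by rewrite normrM [in LHS]normK [X in ofR _ * X]normK -ofRM re_ofR. Qed.

Lemma nKD (a b : K) : re `|a + b| <= re `|a| + re `|b|.
Proof. by rewrite -ler_ofR ofRD -!normK ler_normD. Qed.

Lemma nKN (a : K) : re `|- a| = re `|a|.
Proof. by rewrite normrN. Qed.

Lemma nK_ofR r : re `|ofR r| = `|r|.
Proof. by rewrite normofR re_ofR. Qed.

Lemma nK_eq0 (a : K) : re `|a| = 0 -> a = 0.
Proof. by move=> h; apply/eqP; rewrite -normr_eq0 normK h ofR0. Qed.

Lemma nK_norm (a : K) : re `| `|a| | = re `|a|.
Proof. by rewrite normr_id. Qed.

Lemma nrm_ge0 x : 0 <= nrm x.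
Proof. by rewrite /Defs.nrm -normr_id; exact: nK_ge0. Qed.

Lemma normXK (x : X) : `|x| = ofR (nrm x).
Proof. by rewrite /Defs.nrm -normr_id -normK normr_id. Qed.

Lemma nrmZ (a : K) x : nrm (a *: x) = re `|a| * nrm x.
Proof. by rewrite -[LHS]re_ofR -normXK normrZ normK normXK -ofRM !re_ofR. Qed.

Lemma nrmD x y : nrm (x + y) <= nrm x + nrm y.
Proof. by rewrite -ler_ofR ofRD -!normXK ler_normD. Qed.

Lemma nrmN x : nrm (- x) = nrm x.
Proof. by rewrite /Defs.nrm normrN. Qed.

Lemma nrmB x y : nrm (x - y) = nrm (y - x).
Proof. by rewrite /Defs.nrm distrC. Qed.

Lemma nrm0 : nrm 0 = 0.
Proof. by rewrite /Defs.nrm normr0 re0. Qed.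

Lemma nrm_eq0 x : nrm x = 0 -> x = 0.
Proof. by move=> h; apply/eqP; rewrite -normr_eq0 normXK h ofR0. Qed.

Lemma nrm_triB x y z : nrm (x - z) <= nrm (x - y) + nrm (y - z).
Proof. by have := nrmD (x - y) (y - z); rewrite addrA subrK. Qed.

Lemma ofR_gt0 r : (0 < ofR r) = (0 < r).
Proof. by rewrite -ofR0 ltr_ofR. Qed.

Lemma cvg_nrmP (u : nat -> X) (y : X) :
  u @ \oo --> y <-> forall e : R, 0 < e -> \forall n \near \oo, nrm (u n - y) < e.
Proof.
rewrite cvgrPdistC_lt; split => h e e0.
- have := h (ofR e); rewrite ofR_gt0 => /(_ e0); apply: filterS => n.
  by rewrite normXK ltr_ofR.
- have e0' : 0 < re `|e|.
    by rewrite -ofR_gt0 -normK normr_gt0 gt_eqF.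
  apply: filterS (h _ e0') => n; rewrite -ltr_ofR -normXK -normK.
  by rewrite gtr0_norm.
Qed.


Definition klin (f : X -> K) := forall (a : K) (u v : X), f (a *: u + v) = a * f u + f v.

Section Klin.
Variable f : X -> K.
Hypothesis hf : klin f.

Lemma klin0 : f 0 = 0.
Proof.
have := hf 1 0 0; rewrite scaler0 add0r mul1r => h.
have : f 0 + f 0 = f 0 + 0 by rewrite addr0 -h.
exact: addrI.
Qed.

Lemma klinZ a u : f (a *: u) = a * f u.
Proof. by have := hf a u 0; rewrite !addr0 klin0 addr0. Qed.

Lemma klinD u v : f (u + v) = f u + f v.
Proof. by have := hf 1 u v; rewrite scale1r mul1r. Qed.

Lemma klinN u : f (- u) = - f u.
Proof. by rewrite -scaleN1r klinZ mulN1r. Qed.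

Lemma klinB u v : f (u - v) = f u - f v.
Proof. by rewrite klinD klinN. Qed.
End Klin.

Definition dS (f : X -> K) := [set re `|f x| | x in ballX].

Lemma ballX0 : ballX 0.
Proof. by rewrite /Defs.ballX /= nrm0 ler01. Qed.

Lemma dS_ne f : dS f !=set0.
Proof. by exists (re `|f 0|), 0 => //; exact: ballX0. Qed.

Lemma dn_has_sup f : dnorm f <> 0 -> has_ubound (dS f).
Proof.
move=> h; apply: contra_notP h => hn; apply: sup_out => -[_]; exact: hn.
Qed.

Lemma dn_ge f z : has_ubound (dS f) -> ballX z -> re `|f z| <= dnorm f.
Proof. by move=> hb bz; apply: (ub_le_sup hb); exists z. Qed.

Lemma dn_le f M : (forall z, ballX z -> re `|f z| <= M) -> dnorm f <= M.
Proof. by move=> h; apply: ge_sup; [exact: dS_ne|move=> _ [z bz <-]; exact: h]. Qed.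

Lemma dn_eq f M z0 : (forall z, ballX z -> re `|f z| <= M) -> ballX z0 ->
  re `|f z0| = M -> dnorm f = M.
Proof.
move=> h bz0 e; apply/eqP; rewrite eq_le dn_le //=.
have hb : has_ubound (dS f) by exists M => _ [z bz <-]; exact: h.
by rewrite -e; exact: dn_ge.
Qed.

Lemma dn_ge0 f : has_ubound (dS f) -> 0 <= dnorm f.
Proof. by move=> hb; apply: le_trans (dn_ge hb ballX0); exact: nK_ge0. Qed.

Lemma ball_unit z : nrm z != 0 -> ballX (ofR (nrm z)^-1 *: z).
Proof.
move=> hz; rewrite /Defs.ballX /= nrmZ nK_ofR ger0_norm ?invr_ge0 ?nrm_ge0 //.
by rewrite mulVf.
Qed.

Lemma dn_bound f : klin f -> has_ubound (dS f) -> forall z, re `|f z| <= dnorm f * nrm z.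
Proof.
move=> hf hb z; have [z0|z0] := eqVneq (nrm z) 0.
  by rewrite z0 mulr0 (nrm_eq0 z0) klin0 // normr0 re0.
have := dn_ge hb (ball_unit z0); rewrite klinZ // nKM nK_ofR.
have np : 0 < nrm z by rewrite lt_neqAle eq_sym z0 nrm_ge0.
rewrite ger0_norm ?invr_ge0 ?nrm_ge0 // mulrC ler_pdivrMr //.
Qed.

Lemma klin_cont f M : klin f -> (forall z, re `|f z| <= M * nrm z) -> continuous f.
Proof.
move=> hf hM x; apply/cvgrPdist_lt => eps eps0.
have e0 : 0 < re `|eps| by rewrite -ofR_gt0 -normK normr_gt0 gt_eqF.
have M1 : 0 < `|M| + 1 by rewrite ltr_wpDl.
have d0 : 0 < ofR (re `|eps| / (`|M| + 1)) by rewrite ofR_gt0 divr_gt0.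
have := @cvg_id _ (nbhs x); move/cvgrPdist_lt => /(_ _ d0).
apply: filterS => t /=; rewrite normXK ltr_ofR => ht.
rewrite -klinB // normK -(gtr0_norm eps0) [X in _ < X]normK ltr_ofR.
apply: (le_lt_trans (hM _)); apply: (le_lt_trans (y := (`|M| + 1) * nrm (x - t))).
  apply: ler_wpM2r; first exact: nrm_ge0.
  by apply: (le_trans (ler_norm M)); rewrite lerDl ler01.
by rewrite mulrC -ltr_pdivlMr.
Qed.


Section Ekeland.
Variable g : X -> R.
Hypothesis gD : forall a b, g (a + b) = g a + g b.
Hypothesis gle : forall z, g z <= nrm z.
Variable lam : R.
Hypothesis lam0 : 0 < lam.

Lemma gB a b : g (a - b) = g a - g b.
Proof.
have := gD (a - b) b; rewrite subrK => h; lra.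
Qed.

Definition eS z := [set w | ballX w /\ lam * nrm (w - z) <= g w - g z].

Lemma eS_refl z : ballX z -> eS z z.
Proof. by move=> bz; split => //; rewrite subrr nrm0 mulr0 subrr. Qed.

Lemma eS_trans z w v : eS z w -> eS w v -> eS z v.
Proof.
move=> [_ h1] [bv h2]; split => //.
have := nrm_triB v w z => t.
have : lam * nrm (v - z) <= lam * (nrm (v - w) + nrm (w - z)) by rewrite ler_pM2l.
lra.
Qed.

Lemma g_le1 w : ballX w -> g w <= 1.
Proof. by move=> bw; apply: le_trans (gle w) _. Qed.

Definition esup z := sup [set g w | w in eS z].

Lemma esup_has z : ballX z -> has_sup [set g w | w in eS z].
Proof.
move=> bz; split; first by exists (g z), z => //; exact: eS_refl.
by exists 1 => _ [w [bw _] <-]; exact: g_le1.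
Qed.

Lemma esup_ge z w : ballX z -> eS z w -> g w <= esup z.
Proof. by move=> bz hw; apply: (ub_le_sup (esup_has bz).2); exists w. Qed.

Definition dlt (n : nat) : R := (n.+1%:R)^-1.

Lemma dlt_gt0 n : 0 < dlt n.
Proof. by rewrite /dlt invr_gt0 ltr0Sn. Qed.

Lemma dlt_small e : 0 < e -> exists n, dlt n < e.
Proof. by move=> e0; have [k] := ltr_add_invr e0; rewrite add0r => h; exists k. Qed.

Lemma ekeland x : ballX x ->
  exists y, ballX y /\ lam * nrm (y - x) <= g y - g x /\
     (forall z, ballX z -> g z - g y <= lam * nrm (z - y)).
Proof.
move=> bx.
have nxtP : forall zn : X * nat, exists w, ballX zn.1 ->
    eS zn.1 w /\ esup zn.1 - dlt zn.2 < g w.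
  move=> [z n] /=; have [bz|nbz] := pselect (ballX z); last by exists z.
  have [_ [w hw <-] hlt] := sup_adherent (dlt_gt0 n) (esup_has bz).
  by exists w.
have [nxt hnxt] := choice nxtP.
pose xs := iterseq x (fun z n => nxt (z, n)).
have hxs : forall n, ballX (xs n) /\ eS (xs n) (xs n.+1) /\
                    esup (xs n) - dlt n < g (xs n.+1).
  elim => [|n [bn [hn _]]].
    by have [] := hnxt (x, 0%N) bx.
  have bn1 : ballX (xs n.+1) by case: hn.
  by have [] := hnxt (xs n.+1, n.+1) bn1.
have hmon : forall n m, (n <= m)%N -> eS (xs n) (xs m).
  move=> n; elim => [|m IH].
    by rewrite leqn0 => /eqP ->; apply: eS_refl; case: (hxs 0%N).
  rewrite leq_eqVlt => /orP[/eqP ->|]; first by apply: eS_refl; case: (hxs m.+1).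
  rewrite ltnS => /IH h; apply: (eS_trans h); by case: (hxs m) => _ [].
have hdiam : forall n w, eS (xs n.+1) w -> lam * nrm (w - xs n.+1) <= dlt n.
  move=> n w hw; have [bn [hn hlt]] := hxs n.
  have := esup_ge bn (eS_trans hn hw); case: hw => _; lra.
have hcauchy : forall e, 0 < e -> exists N, forall m, (N.+1 <= m)%N -> nrm (xs m - xs N.+1) < e.
  move=> e e0; have [N hN] := dlt_small (mulr_gt0 e0 lam0); exists N => m hm.
  have h := hdiam N _ (hmon _ _ hm).
  have : lam * nrm (xs m - xs N.+1) < lam * e by rewrite [lam * e]mulrC; lra.
  by rewrite ltr_pM2l.
have hc : cvg (xs @ \oo).
  apply: cauchy_cvg; apply: cauchy_exP => eps eps0.
  have e0 : 0 < re `|eps| by rewrite -ofR_gt0 -normK normr_gt0 gt_eqF.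
  have [N hN] := hcauchy _ e0; exists (xs N.+1); exists N.+1 => // m /= hm.
  rewrite -ball_normE /= -(gtr0_norm eps0) normXK [X in _ < X]normK ltr_ofR nrmB.
  exact: hN.
set y := lim (xs @ \oo) in hc.
have hy : forall e, 0 < e -> forall n, exists m, (n <= m)%N /\ nrm (xs m - y) < e.
  move=> e e0 n; have := (cvg_nrmP xs y).1 hc e e0 => -[N _ hN].
  by exists (maxn N n); split; [exact: leq_maxr|apply: hN; exact: leq_maxl].
have yS : forall n, eS (xs n) y.
  move=> n; split.
  - rewrite /Defs.ballX /=; apply/ler_addgt0Pr => e e0.
    have [m [_ hm]] := hy e e0 n.
    have := nrmD (xs m) (y - xs m); rewrite addrC subrK => t.
    have : ballX (xs m) by case: (hxs m).
    rewrite /Defs.ballX /= => bm; rewrite nrmB in t; lra.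
  - apply/ler_addgt0Pr => e e0.
    have e1 : 0 < e / (lam + 1) by rewrite divr_gt0 // ltr_wpDl // ltW.
    have [m [hnm hm]] := hy _ e1 n.
    have [_ h1] := hmon _ _ hnm.
    have t1 := nrm_triB y (xs m) (xs n).
    have t2 : g (xs m) - g y <= nrm (xs m - y) by rewrite -gB; exact: gle.
    have t3 : lam * nrm (y - xs n) <= lam * (nrm (y - xs m) + nrm (xs m - xs n)).
      by rewrite ler_pM2l.
    have t4 : (lam + 1) * nrm (xs m - y) <= e.
      by rewrite mulrC -ler_pdivlMr ?ltr_wpDl // ltW.
    rewrite [nrm (y - xs m)]nrmB in t3; lra.
exists y; split; first by case: (yS 0%N).
split; first by case: (yS 0%N).
move=> z bz; rewrite leNgt; apply/negP => hz.
have zS : forall n, eS (xs n) z by move=> n; apply: eS_trans (yS n) _; split => //; exact: ltW.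
have h0 : lam * nrm (z - y) <= 0.
  apply/ler_addgt0Pr => e e0; rewrite add0r.
  have e2 : 0 < e / 2 by lra.
  have [n hn] := dlt_small e2.
  have := hdiam n _ (zS n.+1); have := hdiam n _ (yS n.+1).
  have := nrm_triB z (xs n.+1) y; rewrite [nrm (xs n.+1 - y)]nrmB => t a1 a2.
  have : lam * nrm (z - y) <= lam * (nrm (z - xs n.+1) + nrm (y - xs n.+1)) by rewrite ler_pM2l.
  lra.
have : nrm (z - y) = 0.
  apply/eqP; rewrite eq_le nrm_ge0 andbT; by rewrite -(pmulr_rle0 _ lam0).
move/nrm_eq0/eqP; rewrite subr_eq0 => /eqP zy; move: hz; rewrite zy subrr nrm0 mulr0; lra.
Qed.

End Ekeland.


Lemma nrmZr (s : R) v : 0 <= s -> nrm (ofR s *: v) = s * nrm v.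
Proof. by move=> s0; rewrite nrmZ nK_ofR ger0_norm. Qed.

Section BPB.
Hypothesis cplx : forall (u : X -> R) (lam : R),
  (forall a b, u (a + b) = u a + u b) -> (forall r v, u (ofR r *: v) = r * u v) ->
  (forall v, u v <= lam * nrm v) ->
  exists w : X -> K, klin w /\ (forall v, re (w v) = u v) /\
    (forall v, re `|w v| <= lam * nrm v).

Variable f : X -> K.
Hypothesis flin : klin f.
Hypothesis fdn : dnorm f = 1.

Lemma f_hb : has_ubound (dS f).
Proof. by apply: dn_has_sup; rewrite fdn; apply/eqP; exact: oner_neq0. Qed.

Lemma f_bound z : re `|f z| <= nrm z.
Proof. by have := dn_bound flin f_hb z; rewrite fdn mul1r. Qed.

Definition g0 z := re (f z).

Lemma g0D a b : g0 (a + b) = g0 a + g0 b.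
Proof. by rewrite /g0 klinD // reD. Qed.

Lemma g0le z : g0 z <= nrm z.
Proof. exact: le_trans (re_le_norm _) (f_bound z). Qed.

Lemma g0Z s z : g0 (ofR s *: z) = s * g0 z.
Proof. by rewrite /g0 klinZ // reM. Qed.

Lemma g0B a b : g0 (a - b) = g0 a - g0 b.
Proof. have := g0D (a - b) b; rewrite subrK; lra. Qed.

Section Cone.
Variable y : X.
Hypothesis by_ : ballX y.
Variable lam : R.
Hypothesis lam0 : 0 < lam.
Hypothesis hcone : forall z, ballX z -> g0 z - g0 y <= lam * nrm (z - y).

Definition Cn := [set c : X | exists t z, 0 <= t /\ ballX z /\ c = ofR t *: (z - y)].

Lemma Cn0 : Cn 0.
Proof. by exists 0, y; rewrite ofR0 scale0r; split. Qed.

Lemma Cn_cone c : Cn c -> g0 c <= lam * nrm c.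
Proof.
move=> [t [z [t0 [bz ->]]]]; rewrite g0Z nrmZr // g0B mulrCA.
by apply: ler_wpM2l => //; exact: hcone.
Qed.

Lemma CnZ s c : 0 <= s -> Cn c -> Cn (ofR s *: c).
Proof.
move=> s0 [t [z [t0 [bz ->]]]]; exists (s * t), z; split; first exact: mulr_ge0.
by split => //; rewrite scalerA ofRM.
Qed.

Lemma CnD c1 c2 : Cn c1 -> Cn c2 -> Cn (c1 + c2).
Proof.
move=> [t1 [z1 [t10 [bz1 ->]]]] [t2 [z2 [t20 [bz2 ->]]]].
have [T0|TT] := eqVneq (t1 + t2) 0.
  have e1 : t1 = 0 by lra.
  have e2 : t2 = 0 by lra.
  by rewrite e1 e2 ofR0 !scale0r addr0; exact: Cn0.
have Tp : 0 < t1 + t2 by rewrite lt_neqAle eq_sym TT /= addr_ge0.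
exists (t1 + t2), (ofR (t1 + t2)^-1 *: (ofR t1 *: z1 + ofR t2 *: z2)).
split; first exact: ltW.
split.
- have Ti : 0 <= (t1 + t2)^-1 by rewrite invr_ge0 ltW.
  rewrite /Defs.ballX /= nrmZr //.
  rewrite ler_pdivrMl // mulr1.
  apply: le_trans (nrmD _ _) _; rewrite !nrmZr //.
  have : nrm z1 <= 1 by [].
  have : nrm z2 <= 1 by [].
  move=> h2 h1.
  have : t1 * nrm z1 <= t1 * 1 by rewrite ler_wpM2l.
  have : t2 * nrm z2 <= t2 * 1 by rewrite ler_wpM2l.
  lra.
- apply/esym; rewrite scalerBr scalerA -ofRM mulfV ?gt_eqF // ofR1 scale1r.
  rewrite !scalerBr ofRD scalerDl.
  by rewrite opprD addrACA.
Qed.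

Definition qS v := [set lam * nrm (v + c) - g0 c | c in Cn].
Definition qf v := inf (qS v).

Lemma qS_lb v c : Cn c -> - (lam * nrm v) <= lam * nrm (v + c) - g0 c.
Proof.
move=> hc; have := Cn_cone hc.
have := nrm_triB c (- v) 0; rewrite opprK !subr0 nrmN [c + v]addrC => t.
have : lam * nrm c <= lam * (nrm (v + c) + nrm v) by rewrite ler_pM2l // addrC.
lra.
Qed.

Lemma qf_has v : has_lbound (qS v).
Proof. by exists (- (lam * nrm v)) => _ [c hc <-]; exact: qS_lb. Qed.

Lemma qf_le v c : Cn c -> qf v <= lam * nrm (v + c) - g0 c.
Proof. by move=> hc; apply: (ge_inf (qf_has v)); exists c. Qed.

Lemma qf_ge v a : (forall c, Cn c -> a <= lam * nrm (v + c) - g0 c) -> a <= qf v.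
Proof.
move=> h; apply: lb_le_inf; first by exists (lam * nrm (v + 0) - g0 0), 0 => //; exact: Cn0.
by move=> _ [c hc <-]; exact: h.
Qed.

Lemma qf_ub v : qf v <= lam * nrm v.
Proof.
have := qf_le v Cn0; rewrite addr0.
have : g0 0 = 0 by rewrite /g0 klin0 // re0.
move=> ->; rewrite subr0 //.
Qed.

Lemma qf_sublin : sublin (fun s (v : X) => ofR s *: v) qf.
Proof.
split.
- move=> v w.
  have key : forall c1 c2, Cn c1 -> Cn c2 ->
      qf (v + w) <= (lam * nrm (v + c1) - g0 c1) + (lam * nrm (w + c2) - g0 c2).
    move=> c1 c2 h1 h2; apply: le_trans (qf_le _ (CnD h1 h2)) _.
    have e : v + w + (c1 + c2) = (v + c1) + (w + c2) by rewrite addrACA.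
    rewrite e g0D.
    have := nrmD (v + c1) (w + c2).
    have : lam * nrm (v + c1 + (w + c2)) <= lam * (nrm (v + c1) + nrm (w + c2)).
      by rewrite ler_pM2l //; exact: nrmD.
    lra.
  have h1 : forall c2, Cn c2 -> qf (v + w) - (lam * nrm (w + c2) - g0 c2) <= qf v.
    move=> c2 h2; apply: qf_ge => c1 h1; have := key c1 c2 h1 h2; lra.
  have h2 : qf (v + w) - qf v <= qf w.
    apply: qf_ge => c2 h2; have := h1 c2 h2; lra.
  lra.
- move=> s v s0; apply/eqP; rewrite eq_le; apply/andP; split.
  + rewrite -ler_pdivrMl //; apply: qf_ge => c hc.
    rewrite ler_pdivrMl //; apply: le_trans (qf_le _ (CnZ (ltW s0) hc)) _.
    rewrite -scalerDr nrmZr; last exact: ltW.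
    rewrite g0Z; lra.
  + apply: qf_ge => c hc.
    have si : 0 <= s^-1 by rewrite invr_ge0 ltW.
    have := qf_le v (CnZ si hc); rewrite -(ler_pM2l s0) => h; apply: le_trans h _.
    have e : ofR s *: (v + ofR s^-1 *: c) = ofR s *: v + c.
      by rewrite scalerDr scalerA -ofRM mulfV ?gt_eqF // ofR1 scale1r.
    have e2 : s * nrm (v + ofR s^-1 *: c) = nrm (ofR s *: v + c).
      by rewrite -e nrmZr // ltW.
    by rewrite g0Z mulrBr mulrCA e2 mulrA mulfV ?gt_eqF // mul1r.
Qed.

End Cone.


Lemma scX_Dv s (v w : X) : ofR s *: (v + w) = ofR s *: v + ofR s *: w.
Proof. exact: scalerDr. Qed.
Lemma scX_Ds s t (v : X) : ofR (s + t) *: v = ofR s *: v + ofR t *: v.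
Proof. by rewrite ofRD scalerDl. Qed.
Lemma scX_A s t (v : X) : ofR s *: (ofR t *: v) = ofR (s * t) *: v.
Proof. by rewrite scalerA ofRM. Qed.
Lemma scX_1 (v : X) : ofR 1 *: v = v.
Proof. by rewrite ofR1 scale1r. Qed.

Lemma bpb x eps : ballX x -> 0 < eps -> eps <= 1 -> 1 - eps ^+ 2 / 2 < g0 x ->
  exists y gg, sphX y /\ klin gg /\ continuous gg /\ dnorm gg = 1 /\ gg y = 1 /\
    nrm (y - x) < eps /\ dnorm (fun z => gg z - f z) < eps.
Proof.
move=> bx eps0 eps1 hx.
have gx1 : g0 x <= 1 := le_trans (g0le x) bx.
set eta := 1 - g0 x.
have eta0 : 0 <= eta by rewrite /eta subr_ge0.
have etalt : eta < eps ^+ 2 / 2 by rewrite /eta; lra.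
pose lam := (eta / eps + eps / 2) / 2.
have epsn0 : eps != 0 by rewrite gt_eqF.
have lam_eps : lam * eps = (eta + eps ^+ 2 / 2) / 2.
  by rewrite /lam; field.
have lam0 : 0 < lam.
  rewrite /lam; have : 0 <= eta / eps by rewrite divr_ge0 // ltW.
  lra.
have etal : eta < lam * eps by rewrite lam_eps; lra.
have lam2 : 2 * lam < eps.
  have : lam * eps < (eps / 2) * eps.
    rewrite lam_eps; rewrite expr2 in etalt *; lra.
  rewrite ltr_pM2r // => h; lra.
have [y [by_ [hyx hcone]]] := ekeland g0D g0le lam0 bx.
have hyx' : nrm (y - x) < eps.
  have gy1 : g0 y <= 1 := le_trans (g0le y) by_.
  have : lam * nrm (y - x) < lam * eps by rewrite /eta in etal; lra.
  by rewrite ltr_pM2l.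
have [u [uD [uZ uq]]] := hahn_banach_sublin scX_Dv scX_Ds scX_A scX_1
   (qf_sublin by_ lam0 hcone).
have uN v : u (- v) = - u v.
  by have := uZ (-1) v; rewrite ofRN ofR1 scaleN1r mulN1r.
have u_ub v : u v <= lam * nrm v by apply: le_trans (uq v) _; apply: qf_ub.
have u_cone z : ballX z -> g0 (z - y) <= u (z - y).
  move=> bz; have hc : Cn y (z - y) by exists 1, z; rewrite scX_1; split => //; exact: ler01.
  have := le_trans (uq (- (z - y))) (qf_le lam0 hcone (- (z - y)) hc).
  rewrite addNr nrm0 mulr0 sub0r uN; lra.
have [w [wlin [wre wb]]] : exists w : X -> K, klin w /\ (forall v, re (w v) = - u v) /\
    (forall v, re `|w v| <= lam * nrm v).
  apply: cplx.
  - by move=> a b; rewrite uD opprD.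
  - by move=> r v; rewrite uZ mulrN.
  - by move=> v; rewrite -uN -(nrmN v); exact: u_ub.
pose ys := fun v => f v + w v.
have ylin : klin ys by move=> a u1 v1; rewrite /ys flin wlin mulrDr addrACA.
have ysmax : forall z, ballX z -> re (ys z) <= re (ys y).
  move=> z bz; have := u_cone z bz; rewrite g0B uD uN /ys !reD !wre /g0; lra.
set rho := re (ys y).
have rho0 : 0 <= rho by have := ysmax 0 ballX0; rewrite klin0 // re0.
have ysb : forall z, ballX z -> re `|ys z| <= rho.
  move=> z bz; have [->|nz] := eqVneq (ys z) 0; first by rewrite normr0 re0.
  pose a := `|ys z| / ys z.
  have na : `|a| = 1 by rewrite /a normrM normfV normr_id mulfV // normr_eq0.
  have bz' : ballX (a *: z) by rewrite /Defs.ballX /= nrmZ na re1 mul1r.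
  have := ysmax _ bz'; rewrite klinZ // /a mulfVK //.
have rho_eq : ys y = ofR rho.
  have h1 : re (ys y) <= re `|ys y| := re_le_norm _.
  have h2 := ysb y by_.
  have e : re (ys y) = re `|ys y| by apply/eqP; rewrite eq_le h1 /=; apply: le_trans h2 _; rewrite /rho.
  by rewrite (re_norm_eq e) normK -e.
have ysdn_hb : has_ubound (dS ys) by exists rho => _ [z bz <-]; exact: ysb.
have ysy : re `|ys y| = rho by rewrite rho_eq nK_ofR ger0_norm.
have by1 : nrm y <= 1 := by_.
have rho_up : rho <= 1 + lam.
  rewrite -ysy; apply: le_trans (nKD _ _) _.
  have := f_bound y; have := wb y.
  have : lam * nrm y <= lam * 1 by rewrite ler_wpM2l // ltW.
  lra.
have rho_lo : 1 <= rho + lam.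
  rewrite -fdn; apply: dn_le => z bz.
  have e : f z = ys z - w z by rewrite /ys addrK.
  rewrite e; apply: le_trans (nKD _ _) _; rewrite nKN.
  have := ysb z bz; have := wb z.
  have : lam * nrm z <= lam * 1 by rewrite ler_wpM2l // ltW.
  lra.
have rhop : 0 < rho by lra.
have ny : nrm y = 1.
  apply/eqP; rewrite eq_le by1 /=.
  have := dn_bound ylin ysdn_hb y.
  rewrite (dn_eq ysb by_ ysy) ysy -{1}(mulr1 rho) ler_pM2l //.
pose gg := fun v => ofR rho^-1 * ys v.
have glin : klin gg by move=> a u1 v1; rewrite /gg ylin mulrDr mulrCA.
have gy : gg y = 1 by rewrite /gg rho_eq -ofRM mulVf ?gt_eqF // ofR1.
have ggb : forall z, ballX z -> re `|gg z| <= 1.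
  move=> z bz; rewrite /gg nKM nK_ofR ger0_norm; last by rewrite invr_ge0 ltW.
  by rewrite ler_pdivrMl // mulr1; exact: ysb.
have gdn : dnorm gg = 1 by apply: (dn_eq ggb by_); rewrite gy normr1 re1.
have ghb : has_ubound (dS gg) by exists 1 => _ [z bz <-]; exact: ggb.
exists y, gg; split; first exact: ny.
split; first exact: glin.
split.
  apply: (@klin_cont gg 1 glin) => z; rewrite -gdn; exact: dn_bound.
split; first exact: gdn.
split; first exact: gy.
split; first exact: hyx'.
apply: (@le_lt_trans _ _ (2 * lam)) _ lam2.
apply: dn_le => z bz.
have e : gg z - f z = ofR (rho^-1 - 1) * ys z + w z.
  by rewrite /gg ofRB ofR1 mulrBl mul1r /ys; ring.
rewrite e; apply: le_trans (nKD _ _) _; rewrite nKM nK_ofR.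
have h1 : `|rho^-1 - 1| * rho = `|1 - rho|.
  have e1 : (rho^-1 - 1) * rho = 1 - rho by rewrite mulrBl mulVf ?gt_eqF // mul1r.
  by rewrite -e1 normrM (ger0_norm (ltW rhop)).
have h2 : `|1 - rho| <= lam by rewrite ler_norml; apply/andP; split; lra.
have h3 : `|rho^-1 - 1| * re `|ys z| <= `|rho^-1 - 1| * rho.
  by rewrite ler_wpM2l //; exact: ysb.
have h4 : lam * nrm z <= lam * 1 by rewrite ler_wpM2l // ltW.
have := wb z; lra.
Qed.

End BPB.


Section Main.
Hypothesis cplx : forall (u : X -> R) (lam : R),
  (forall a b, u (a + b) = u a + u b) -> (forall r v, u (ofR r *: v) = r * u v) ->
  (forall v, u v <= lam * nrm v) ->
  exists w : X -> K, klin w /\ (forall v, re (w v) = u v) /\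
    (forall v, re `|w v| <= lam * nrm v).

Lemma dn_sub_hb (g h : X -> K) : dnorm g = 1 -> dnorm h = 1 -> has_ubound (dS (fun z => g z - h z)).
Proof.
move=> gd hd; exists 2 => _ [z bz <-].
have hg : has_ubound (dS g) by apply: dn_has_sup; rewrite gd; apply/eqP; exact: oner_neq0.
have hh : has_ubound (dS h) by apply: dn_has_sup; rewrite hd; apply/eqP; exact: oner_neq0.
have := dn_ge hg bz; have := dn_ge hh bz; rewrite gd hd.
have := nKD (g z) (- h z); rewrite nKN; lra.
Qed.

Lemma dn_tri (g h k : X -> K) : dnorm g = 1 -> dnorm h = 1 -> dnorm k = 1 ->
  dnorm (fun z => g z - k z) <= dnorm (fun z => g z - h z) + dnorm (fun z => h z - k z).
Proof.
move=> gd hd kd; apply: dn_le => z bz.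
have := dn_ge (dn_sub_hb gd hd) bz; have := dn_ge (dn_sub_hb hd kd) bz => /= a1 a2.
have := nKD (g z - h z) (h z - k z); rewrite addrA subrK; lra.
Qed.

Lemma sph_ball z : sphX z -> ballX z.
Proof. by rewrite /Defs.sphX /Defs.ballX /= => ->. Qed.

Lemma lim_const_eq (y x0 : X) : (fun _ : nat => y) @ \oo --> x0 -> y = x0.
Proof.
move=> /cvg_nrmP h.
have : nrm (y - x0) <= 0.
  apply/ler_addgt0Pr => e e0; rewrite add0r; have [N _ hN] := h e e0.
  exact: ltW (hN N (leqnn N)).
move=> h0; apply/eqP; rewrite -subr_eq0; apply/eqP; apply: nrm_eq0.
by apply/eqP; rewrite eq_le h0 nrm_ge0.
Qed.

Lemma main_equiv : @lemma3p10_equiv R K re X.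
Proof.
have iii_i : @propP_with R K re X (fun e => e ^+ 2 / 2) -> @propP R K re X.
  by move=> h; exists (fun e => e ^+ 2 / 2).
have i_ii : @propP R K re X -> @dense_strexp_SE R K re X.
  move=> [eta [eta0 heta]] x f [sx [fd [fdn fx]]] e e0.
  pose e' := Num.min e (2^-1).
  have e'0 : 0 < e' by rewrite lt_min e0 invr_gt0 ltr0Sn.
  have e'1 : e' < 1 by rewrite gt_min; apply/orP; right; rewrite invf_lt1 ?ltr0Sn // ltr1n.
  have e'e : e' <= e by rewrite ge_min lexx.
  have e'i : 0 < e' < 1 by rewrite e'0 e'1.
  have := heta e' e'i x f sx fd fdn.
  rewrite fx re1; have := eta0 e' e'i => h1 h2.
  have [g [y [[gd [x0 sx0]] [sy [gdn [gy [hgf hyx]]]]]]] := h2 ltac:(lra).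
  have hg : has_ubound (dS g) by apply: dn_has_sup; rewrite gdn; apply/eqP; exact: oner_neq0.
  have [bx0 [supx0 seqx0]] := sx0.
  have sup1 : sup [set re (g z) | z in ballX] = 1.
    apply/eqP; rewrite eq_le; apply/andP; split.
    - apply: ge_sup; first by exists (re (g 0)), 0 => //; exact: ballX0.
      move=> _ [z bz <-]; rewrite -gdn; apply: le_trans (re_le_norm _) _; exact: dn_ge.
    - have hub : has_ubound [set re (g z) | z in ballX].
        exists 1 => _ [z bz <-]; rewrite -gdn; apply: le_trans (re_le_norm _) _; exact: dn_ge.
      by rewrite -re1 -gy; apply: (ub_le_sup hub); exists y => //; exact: sph_ball.
  have yx0 : y = x0.
    apply: lim_const_eq; apply: seqx0; first by move=> _; exact: sph_ball.
    by rewrite gy supx0 sup1 re1; exact: cvg_cst.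
  exists y, g; split; first by exists g; split => //; rewrite yx0.
  split; first by split => //; exists x0.
  do 2 (split => //).
  split; [exact: lt_le_trans hyx e'e | exact: lt_le_trans hgf e'e].
have ii_iii : @dense_strexp_SE R K re X -> @propP_with R K re X (fun e => e ^+ 2 / 2).
  move=> hd; split.
    by move=> e /andP[e0 _]; rewrite divr_gt0 // exprn_gt0.
  move=> e /andP[e0 e1] x f sx [flin fc] fdn hx.
  have [y1 [g1 [sy1 [g1lin [g1c [g1dn [g1y [hy1 hg1]]]]]]]] :=
    bpb cplx flin fdn (sph_ball sx) e0 (ltW e1) hx.
  pose d := Num.min (e - nrm (y1 - x)) (e - dnorm (fun z => g1 z - f z)).
  have d0 : 0 < d by rewrite lt_min !subr_gt0 hy1 hg1.
  have [y [g [[h [hdual [by_ _]]] [gse [gdn [gy [hyy1 hgg1]]]]]]] :=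
    hd y1 g1 (conj sy1 (conj (conj g1lin g1c) (conj g1dn g1y))) d d0.
  have [[gl gcc] _] := gse.
  exists g, y; split; first exact: gse.
  split.
    rewrite /Defs.sphX /=; apply/eqP; rewrite eq_le by_ /=.
    have hg : has_ubound (dS g) by apply: dn_has_sup; rewrite gdn; apply/eqP; exact: oner_neq0.
    have := dn_bound gl hg y; rewrite gdn gy normr1 re1 mul1r //.
  do 2 (split => //).
  have dd1 : d <= e - nrm (y1 - x) by rewrite ge_min lexx.
  have dd2 : d <= e - dnorm (fun z => g1 z - f z) by rewrite ge_min lexx orbT.
  split.
  - have := dn_tri gdn g1dn fdn; lra.
  - have := nrm_triB y y1 x; lra.
split; split.
- exact: i_ii.
- by move=> /ii_iii /iii_i.
- exact: ii_iii.
- by move=> /iii_i /i_ii.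
Qed.
End Main.

End Generic.

Lemma real_case (R : realType) (X : completeNormedModType R) :
  @lemma3p10_equiv R R (fun r : R => r) X.
Proof.
apply: (@main_equiv R R (fun r => r) (fun r => r) X); try done.
- by move=> k; exact: ler_norm.
move=> u lam uD uZ ub.
have uN v : u (- v) = - u v by have := uZ (-1) v; rewrite scaleN1r mulN1r.
exists u; split; last split => //.
- by move=> a v1 v2; rewrite uD uZ.
- move=> v; rewrite ler_norml ub andbT; have := ub (- v).
  rewrite uN /Defs.nrm normrN; lra.
Qed.

Section Cplx.
Variable R : realType.
Local Notation C := R[i].
Local Open Scope complex_scope.

Lemma cRe_D (a b : C) : complex.Re (a + b) = complex.Re a + complex.Re b.
Proof. by case: a => ? ?; case: b. Qed.

Lemma cRe_ofR (r : R) : complex.Re (r%:C) = r.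
Proof. by []. Qed.

Lemma cofRD (r s : R) : (r + s)%:C = r%:C + s%:C :> C.
Proof. exact: rmorphD. Qed.

Lemma cofRM (r s : R) : (r * s)%:C = r%:C * s%:C :> C.
Proof. exact: rmorphM. Qed.

Lemma cofR1 : (1 : R)%:C = 1 :> C.
Proof. exact: rmorph1. Qed.

Lemma cnormK (k : C) : `|k| = (complex.Re `|k|)%:C.
Proof. by rewrite normc_def. Qed.

Lemma cler (r s : R) : ((r%:C : C) <= s%:C) = (r <= s).
Proof. exact: lecR. Qed.

Lemma cltr (r s : R) : ((r%:C : C) < s%:C) = (r < s).
Proof. exact: ltcR. Qed.

Lemma cre_le_norm (k : C) : complex.Re k <= complex.Re `|k|.
Proof.
have := normc_ge_Re k; rewrite lecE => /andP[_ h].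
exact: le_trans (ler_norm _) h.
Qed.

Lemma cre_norm_eq (k : C) : complex.Re k = complex.Re `|k| -> k = `|k|.
Proof.
case: k => a b; rewrite normc_def /= => h.
have s0 : 0 <= a ^+ 2 + b ^+ 2 by rewrite addr_ge0 // sqr_ge0.
have h2 : a ^+ 2 = a ^+ 2 + b ^+ 2 by rewrite {1}h sqr_sqrtr.
have b0 : b = 0.
  by apply/eqP; rewrite -sqrf_eq0; apply/eqP; lra.
by rewrite b0 -[in RHS](b0) -h.
Qed.

Lemma creM (r : R) (k : C) : complex.Re (r%:C * k) = r * complex.Re k.
Proof. by case: k => a b /=; rewrite mul0r subr0. Qed.

Lemma cnormofR (r : R) : `|r%:C| = `|r|%:C :> C.
Proof. by rewrite normc_def /= expr0n /= addr0 sqrtr_sqr. Qed.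

End Cplx.

Lemma cplx_ext (R : realType) (X : completeNormedModType R[i]) (u : X -> R) (lam : R) :
  (forall a b, u (a + b) = u a + u b) -> (forall r v, u ((r%:C)%C *: v) = r * u v) ->
  (forall v, u v <= lam * @Defs.nrm R R[i] (@complex.Re R) X v) ->
  exists w : X -> R[i], klin w /\ (forall v, complex.Re (w v) = u v) /\
    (forall v, complex.Re `|w v| <= lam * @Defs.nrm R R[i] (@complex.Re R) X v).
Proof.
move=> uD uZ ub.
have uN v : u (- v) = - u v.
  by have := uZ (-1) v; rewrite rmorphN1 scaleN1r mulN1r.
have uZ' (x : R) v : u ((x%:C)%C *: v) = x * u v := uZ x v.
pose w := fun v => ((u v)%:C - 'i * (u ('i *: v))%:C)%C.
have wD v1 v2 : w (v1 + v2) = w v1 + w v2.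
  by rewrite /w scalerDr !uD !rmorphD; ring.
have cE (x y : R) : (x +i* y)%C = ((x%:C)%C + (y%:C)%C * 'i)%C.
  by apply/eqP; rewrite eq_complex /= !(mulr0, mul0r, mulr1, addr0, subr0, add0r) !eqxx.
have ii v : ('i : R[i]) *: (('i : R[i]) *: v) = - v.
  by rewrite scalerA -expr2 sqr_i scaleN1r.
have wZ a v : w (a *: v) = a * w v.
  case: a => x y; rewrite cE.
  have e1 : (((x%:C)%C + (y%:C)%C * 'i) *: v = (x%:C)%C *: v + (y%:C)%C *: ('i *: v))%C.
    by rewrite scalerDl scalerA.
  have e2 : ('i *: (((x%:C)%C + (y%:C)%C * 'i) *: v) =
      (x%:C)%C *: ('i *: v) + (y%:C)%C *: ('i *: ('i *: v)))%C.
    by rewrite e1 scalerDr !scalerA; congr (_ + _); congr (_ *: _); ring.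
  rewrite /w e2 e1 !uD !uZ' ii uN.
  apply/eqP; rewrite eq_complex /=; apply/andP; split; apply/eqP; ring.
have wlin : klin w by move=> a v1 v2; rewrite wD wZ.
have wre v : complex.Re (w v) = u v.
  by rewrite /w /=; ring.
exists w; split => //; split => // v.
have lam_ge : 0 <= lam * @Defs.nrm R R[i] (@complex.Re R) X v.
  have := ub v; have := ub (- v); rewrite uN /Defs.nrm normrN; lra.
have [->|nz] := eqVneq (w v) 0; first by rewrite normr0.
pose a := `|w v| / w v.
have na : `|a| = 1 by rewrite /a normrM normfV normr_id mulfV // normr_eq0.
have := ub (a *: v); rewrite -wre wZ /a mulfVK // /Defs.nrm normrZ na mul1r.
by [].
Qed.

Lemma complex_case (R : realType) (X : completeNormedModType R[i]) :
  @lemma3p10_equiv R R[i] (@complex.Re R) X.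
Proof.
apply: (@main_equiv R R[i] (@complex.Re R) (real_complex R) X).
- exact: cRe_D.
- exact: cRe_ofR.
- exact: cofRD.
- exact: cofRM.
- exact: cofR1.
- exact: cnormK.
- exact: cler.
- exact: cltr.
- exact: cre_le_norm.
- exact: cre_norm_eq.
- exact: creM.
- exact: cnormofR.
- move=> u lam; exact: cplx_ext.
Qed.

Theorem lemma3p10 :
  (forall (R : realType) (X : completeNormedModType R),
      @lemma3p10_equiv R R (fun r : R => r) X) /\
  (forall (R : realType) (X : completeNormedModType R[i]),
      @lemma3p10_equiv R R[i] (@complex.Re R) X).
Proof. split; [exact: real_case | exact: complex_case]. Qed.
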